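(* Let $n\in\mathbb{N}$, $H\in\mathbb{R}^{n\times n}$, $W\in\mathbb{R}^{n\times n}$ with $W\succ 0$, let $C=\mathrm{diag}(C_{11},\dots,C_{nn})$ be diagonal with all $C_{ii}\neq 0$, and let $V=\mathrm{diag}(\sigma_1^2,\dots,\sigma_n^2)$ with all $\sigma_i>0$. Assume $(H,C)$ is observable and $(H,D)$ is controllable, where $W=DD^T$. Let $\Sigma$ be the unique positive semidefinite solution of $$\Sigma = H\Sigma H^T - H\Sigma C^T(C\Sigma C^T+V)^{-1}C\Sigma H^T + W ,$$ and let $\overline{\Sigma}:=\Sigma-\Sigma C^T(C\Sigma C^T+V)^{-1}C\Sigma=(C^TV^{-1}C+\Sigma^{-1})^{-1}$. Then $$n\ln\!\left(\frac{\sigma_u^2}{C_u^2+\sigma_u^2\lambda_n(W)^{-1}}\right)\;\le\;\ln\det\overline{\Sigma}\;\le\; n\ln\!\left(\frac{\sigma_l^2}{C_l^2}\right).$$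
   Context: $\Sigma$ and $\overline\Sigma$ are the steady-state a priori and a posteriori error covariances of a Kalman filter for $x(k+1)=Hx(k)+w(k)$, $w(k)\sim\mathcal N(0,W)$, with privatized measurements $Cx(k)+v(k)$, $v(k)\sim\mathcal N(0,V)$. For a symmetric matrix $K$, $\lambda_n(K)\le\dots\le\lambda_1(K)$ denote its eigenvalues. Indices: $l:=\arg\min_{1\le i\le n} C_{ii}^2/\sigma_i^2$ and $u:=\arg\max_{1\le i\le n} C_{ii}^2/\sigma_i^2$; $C_l:=C_{ll}$, $C_u:=C_{uu}$, and $\sigma_l,\sigma_u$ are the corresponding $\sigma_i$. *)

(* Defs.v *)
From HB Require Import structures.
From mathcomp Require Import all_boot all_order all_algebra.
Set Implicit Arguments. Unset Strict Implicit. Unset Printing Implicit Defensive.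
Import Order.TTheory GRing.Theory Num.Theory.
Local Open Scope ring_scope.

Definition psd (R : realFieldType) (n : nat) (A : 'M[R]_n) : Prop :=
  A^T = A /\ forall x : 'cV[R]_n, 0 <= (x^T *m A *m x) 0 0.

Definition pd (R : realFieldType) (n : nat) (A : 'M[R]_n) : Prop :=
  A^T = A /\ forall x : 'cV[R]_n, x != 0 -> 0 < (x^T *m A *m x) 0 0.

(* (H, C) observable: the observability matrix [C; CH; ...; CH^(n-1)] has rank n
   (rank of the stacked matrix = rank of the sum of the row spaces). *)
Definition observable (R : fieldType) (n p : nat) (H : 'M[R]_n) (C : 'M[R]_(p, n)) : Prop :=
  \rank (\sum_(i < n) <<C *m H ^+ i>>)%MS = n.

(* (H, D) controllable: [D, HD, ..., H^(n-1)D] has rank n (rank of its transpose). *)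
Definition controllable (R : fieldType) (n m : nat) (H : 'M[R]_n) (D : 'M[R]_(n, m)) : Prop :=
  \rank (\sum_(i < n) <<(H ^+ i *m D)^T>>)%MS = n.

Definition is_min_eigenvalue (R : realFieldType) (n : nat) (A : 'M[R]_n) (lam : R) : Prop :=
  eigenvalue A lam /\ forall a, eigenvalue A a -> lam <= a.

(* Main.v *)
Require Import Defs.
From HB Require Import structures.
From mathcomp Require Import all_boot all_order all_algebra.
From mathcomp Require Import sesquilinear spectral complex.
From mathcomp Require Import ring lra.
Set Implicit Arguments. Unset Strict Implicit. Unset Printing Implicit Defensive.
Import Order.TTheory GRing.Theory Num.Theory.
Local Open Scope ring_scope.
Module SpecM.
Import Num.Def.
Local Open Scope sesquilinear_scope.
Local Open Scope sesquilinear_scope.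

Section Spec.
Variable R : rcfType.
Local Notation C := (R[i]).
Local Notation rc := (real_complex R).

Lemma rc_real (r : R) : rc r \is Num.real.
Proof. by rewrite complex_real. Qed.

Lemma ReD (x y : C) : complex.Re (x + y) = complex.Re x + complex.Re y.
Proof. by case: x; case: y. Qed.
Lemma ImD (x y : C) : complex.Im (x + y) = complex.Im x + complex.Im y.
Proof. by case: x; case: y. Qed.
Lemma Re0 : complex.Re (0 : C) = 0. Proof. by []. Qed.
Lemma Im0 : complex.Im (0 : C) = 0. Proof. by []. Qed.
Lemma Re_sum I (r : seq I) (F : I -> C) :
  complex.Re (\sum_(i <- r) F i) = \sum_(i <- r) complex.Re (F i).
Proof. exact: (big_morph _ ReD Re0). Qed.
Lemma Im_sum I (r : seq I) (F : I -> C) :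
  complex.Im (\sum_(i <- r) F i) = \sum_(i <- r) complex.Im (F i).
Proof. exact: (big_morph _ ImD Im0). Qed.
Lemma ReMr (x : C) (r : R) : complex.Re (x * rc r) = complex.Re x * r.
Proof. by case: x => a b /=; rewrite mulr0 subr0. Qed.
Lemma ImMr (x : C) (r : R) : complex.Im (x * rc r) = complex.Im x * r.
Proof. by case: x => a b /=; rewrite mulr0 add0r. Qed.
Lemma ReMl (x : C) (r : R) : complex.Re (rc r * x) = r * complex.Re x.
Proof. by case: x => a b /=; rewrite mul0r subr0. Qed.
Lemma ImMl (x : C) (r : R) : complex.Im (rc r * x) = r * complex.Im x.
Proof. by case: x => a b /=; rewrite mul0r addr0. Qed.

Lemma sym_spec n (A : 'M[R]_n) : A^T = A ->
  exists d : 'I_n -> R, exists q : 'cV[R]_n -> 'I_n -> R,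
   [/\ forall i, eigenvalue A (d i),
       \det A = \prod_i d i,
       forall x i, 0 <= q x i,
       forall x, (x^T *m x) 0 0 = \sum_i q x i &
       forall x, (x^T *m A *m x) 0 0 = \sum_i d i * q x i].
Proof.
move=> Asym.
pose A' := map_mx rc A.
have A'real : A' \is a realmx by apply/mxOverP => i j; rewrite mxE rc_real.
have A'sym : A' \is symmetricmx.
  apply/is_hermitianmxP; rewrite expr0 scale1r; apply/matrixP=> i j.
  by rewrite !mxE -{1}Asym mxE.
have A'herm := realsym_hermsym A'sym A'real.
have /orthomx_spectralP A'E := hermitian_normalmx A'herm.
set P := spectralmx A' in A'E; set D := spectral_diag A' in A'E.
have Dreal := hermitian_spectral_diag_real A'herm; rewrite -/D in Dreal.
have DE i : D 0 i = rc (complex.Re (D 0 i)).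
  by rewrite RRe_real // (mxOverP Dreal).
have Pu : P \is unitarymx by apply: spectral_unitarymx.
have Punit : P \in unitmx by apply: spectral_unit.
have PA : P *m A' = diag_mx D *m P.
  by rewrite {1}A'E !mulmxA mulmxV // mul1mx.
have tcE (y : 'cV[C]_n) i : (y ^t conjC) 0 i = conjC (y i 0) by rewrite !mxE.
have PtP : P ^t conjC *m P = 1%:M by rewrite -invmx_unitary // mulVmx.
have key (x : 'cV[R]_n) (z := map_mx rc x) (y := P *m z) :
  [/\ z^T *m z = y ^t conjC *m y, z^T *m A' *m z = y ^t conjC *m diag_mx D *m y,
      rc ((x^T *m x) 0 0) = (z^T *m z) 0 0 & rc ((x^T *m A *m x) 0 0) = (z^T *m A' *m z) 0 0].
  have zc : map_mx conjC z^T = z^T.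
    by apply/matrixP => i j; rewrite !mxE conj_Creal // rc_real.
  have yt : y ^t conjC = z^T *m P ^t conjC.
    by rewrite /y trmx_mul map_mxM zc.
  split.
  - by rewrite yt -mulmxA [P ^t conjC *m _]mulmxA PtP mul1mx.
  - by rewrite yt A'E invmx_unitary // !mulmxA.
  - by rewrite /z map_trmx -map_mxM [RHS]mxE.
  - by rewrite /z map_trmx -!map_mxM [RHS]mxE.
have qE (x : 'cV[R]_n) i : rc (complex.Re ((((P *m map_mx rc x) i 0)^*) * (P *m map_mx rc x) i 0))
   = ((P *m map_mx rc x) i 0)^* * (P *m map_mx rc x) i 0.
  by rewrite RRe_real // ger0_real // mulrC mul_conjC_ge0.
exists (fun i => complex.Re (D 0 i)).
exists (fun x i => complex.Re ((((P *m map_mx rc x) i 0)^*) * (P *m map_mx rc x) i 0)).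
split.
- move=> i; set v := row i P.
  have vA : v *m A' = D 0 i *: v.
    by rewrite /v -row_mul PA row_mul row_diag_mx -scalemxAl rowE.
  have v0 : v != 0.
    apply/negP => /eqP v0.
    have : row i P *m invmx P = 0 by rewrite -/v v0 mul0mx.
    rewrite rowE.
    rewrite -mulmxA mulmxV // mulmx1 => /matrixP/(_ 0 i).
    by rewrite !mxE !eqxx /= => /eqP; rewrite oner_eq0.
  pose vr := map_mx (@complex.Re R) v; pose vi := map_mx (@complex.Im R) v.
  have eRe : vr *m A = complex.Re (D 0 i) *: vr.
    apply/matrixP => a k; have := congr1 (fun M : 'M[C]_(1, n) => complex.Re (M a k)) vA.
    rewrite /= [in LHS]mxE Re_sum [in RHS]mxE {1}DE ReMl !mxE => <-.
    apply: eq_bigr => j _; by rewrite !mxE ReMr.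
  have eIm : vi *m A = complex.Re (D 0 i) *: vi.
    apply/matrixP => a k; have := congr1 (fun M : 'M[C]_(1, n) => complex.Im (M a k)) vA.
    rewrite /= [in LHS]mxE Im_sum [in RHS]mxE {1}DE ImMl !mxE => <-.
    apply: eq_bigr => j _; by rewrite !mxE ImMr.
  have [vr0|vrn0] := eqVneq vr 0; last by apply/eigenvalueP; exists vr.
  have [vi0|vin0] := eqVneq vi 0; last by apply/eigenvalueP; exists vi.
  case/negP: v0; apply/eqP/matrixP => a k.
  have := congr1 (fun M : 'M[R]_(1, n) => M a k) vr0.
  have := congr1 (fun M : 'M[R]_(1, n) => M a k) vi0; rewrite /= !mxE.
  by case: (P i k) => ? ? /= -> ->.
- apply: complexI; rewrite -det_map_mx -/A' rmorph_prod /=.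
  rewrite A'E !det_mulmx det_inv det_diag mulrC mulrA mulrV ?mul1r; last first.
    by rewrite -unitmxE.
  by apply: eq_bigr => i _; rewrite -DE.
- move=> x i; rewrite -(@lecR R) qE rmorph0 mulrC; exact: mul_conjC_ge0.
- move=> x; apply: complexI; have [E1 _ E3 _] := key x.
  rewrite E3 E1 rmorph_sum mxE; apply: eq_bigr => i _ /=.
  rewrite tcE; exact: (esym (qE x i)).
- move=> x; apply: complexI; have [_ E2 _ E4] := key x.
  rewrite E4 E2 rmorph_sum -mulmxA mul_diag_mx mxE; apply: eq_bigr => i _ /=.
  rewrite rmorphM tcE (mxE _ _ i 0).
  rewrite [X in _ = _ * X](qE x i) [X in _ = X * _](esym (DE i)); exact: mulrCA.
Qed.

Lemma norm2E n (v : 'rV[R]_n) : (v *m v^T) 0 0 = \sum_j v 0 j ^+ 2.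
Proof. by rewrite mxE; apply: eq_bigr => j _; rewrite mxE expr2. Qed.

Lemma norm2_gt0 n (v : 'rV[R]_n) : v != 0 -> 0 < (v *m v^T) 0 0.
Proof.
move=> v0; rewrite norm2E lt_def sumr_ge0 ?andbT => [|j _]; last exact: sqr_ge0.
apply/negP => /eqP /psumr_eq0P H; case/negP: v0; apply/eqP/matrixP => a j.
rewrite ord1 mxE; apply/eqP; rewrite -sqrf_eq0; apply/eqP; apply: H => // k _.
exact: sqr_ge0.
Qed.

Lemma eig_bound n (A : 'M[R]_n) a c d : eigenvalue A a ->
  (forall x : 'cV_n, c * (x^T *m x) 0 0 <= (x^T *m A *m x) 0 0) ->
  (forall x : 'cV_n, (x^T *m A *m x) 0 0 <= d * (x^T *m x) 0 0) -> c <= a <= d.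
Proof.
move=> /eigenvalueP [v vA v0] Hc Hd.
have s0 := norm2_gt0 v0.
have E : (v^T^T *m A *m v^T) 0 0 = a * (v *m v^T) 0 0.
  by rewrite trmxK vA -scalemxAl mxE.
move: (Hc v^T) (Hd v^T); rewrite E trmxK => h1 h2.
by rewrite -(ler_pM2r s0) h1 -(ler_pM2r s0) h2.
Qed.

Lemma min_eig_qf n (A : 'M[R]_n) lam : A^T = A -> is_min_eigenvalue A lam ->
  forall x : 'cV_n, lam * (x^T *m x) 0 0 <= (x^T *m A *m x) 0 0.
Proof.
move=> Asym [_ Hmin] x; have [d [q [Hd _ Hq Hx HA]]] := sym_spec Asym.
rewrite Hx HA mulr_sumr; apply: ler_sum => i _.
by rewrite ler_wpM2r // Hmin.
Qed.

Lemma det_bounds n (A : 'M[R]_n) c d : A^T = A -> 0 <= c ->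
  (forall x : 'cV_n, c * (x^T *m x) 0 0 <= (x^T *m A *m x) 0 0) ->
  (forall x : 'cV_n, (x^T *m A *m x) 0 0 <= d * (x^T *m x) 0 0) ->
  c ^+ n <= \det A <= d ^+ n.
Proof.
move=> Asym c0 Hc Hd; have [e [q [He Hdet _ _ _]]] := sym_spec Asym.
have B i := eig_bound (He i) Hc Hd.
have pc (r : R) : \prod_(i < n) r = r ^+ n by rewrite prodr_const card_ord.
rewrite Hdet -!pc; apply/andP; split; apply: ler_prod => i _.
  by rewrite c0; case/andP: (B i).
case/andP: (B i) => h1 h2; rewrite h2 andbT; exact: le_trans h1.
Qed.
End Spec.
End SpecM.


Section Helpers.
Variable R : rcfType.

Lemma trD m n (A B : 'M[R]_(m,n)) : (A + B)^T = A^T + B^T.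
Proof. exact: linearD. Qed.
Lemma trN m n (A : 'M[R]_(m,n)) : (- A)^T = - A^T.
Proof. exact: linearN. Qed.
Lemma eD m n (A B : 'M[R]_(m, n)) i j : (A + B) i j = A i j + B i j.
Proof. by rewrite mxE. Qed.
Lemma eN m n (A : 'M[R]_(m, n)) i j : (- A) i j = - A i j.
Proof. by rewrite mxE. Qed.

Lemma qf_diag n (d : 'rV[R]_n) (w : 'cV[R]_n) :
  (w^T *m diag_mx d *m w) 0 0 = \sum_i d 0 i * w i 0 ^+ 2.
Proof.
rewrite -mulmxA mul_diag_mx mxE; apply: eq_bigr => i _; rewrite !mxE; ring.
Qed.

Lemma nrm_sum n (w : 'cV[R]_n) : (w^T *m w) 0 0 = \sum_i w i 0 ^+ 2.
Proof. by rewrite mxE; apply: eq_bigr => i _; rewrite !mxE expr2. Qed.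

Lemma wsum_gt0 n (a : 'I_n -> R) (w : 'cV[R]_n) : (forall i, 0 < a i) -> w != 0 ->
  0 < \sum_i a i * w i 0 ^+ 2.
Proof.
move=> a0 w0; rewrite lt_def sumr_ge0 ?andbT => [|j _]; last first.
  by rewrite mulr_ge0 ?sqr_ge0 // ltW.
apply/negP => /eqP /psumr_eq0P H.
have Hz : forall i, a i * w i 0 ^+ 2 = 0.
  by move=> i; apply: H => // k _; rewrite mulr_ge0 ?sqr_ge0 // ltW.
case/negP: w0; apply/eqP/matrixP => j k.
rewrite ord1 mxE; apply/eqP; rewrite -sqrf_eq0.
by have /eqP := Hz j; rewrite mulf_eq0 (gt_eqF (a0 j)).
Qed.

Lemma percoord (al be ga k y w : R) : 0 < al -> 0 < be -> 0 <= k ->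
  k * (al^-1 + ga ^+ 2 / be) <= 1 ->
  k * (y + ga * w) ^+ 2 <= al * y ^+ 2 + be * w ^+ 2.
Proof.
move=> al0 be0 k0 hk.
have h1 : (y + ga * w) ^+ 2 <= (al^-1 + ga ^+ 2 / be) * (al * y ^+ 2 + be * w ^+ 2).
  have -> : (al^-1 + ga ^+ 2 / be) * (al * y ^+ 2 + be * w ^+ 2)
     = (y + ga * w) ^+ 2 + (be * w - ga * al * y) ^+ 2 / (al * be).
    by field; rewrite ?gt_eqF.
  by rewrite lerDl divr_ge0 ?sqr_ge0 // mulr_ge0 // ltW.
have h2 : 0 <= al * y ^+ 2 + be * w ^+ 2.
  by rewrite addr_ge0 // mulr_ge0 ?sqr_ge0 // ltW.
apply: le_trans (ler_wpM2l k0 h1) _; rewrite mulrA.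
by rewrite -[X in _ <= X]mul1r ler_wpM2r.
Qed.

Lemma Fmin_gen n (S M K C : 'M[R]_n) (x w : 'cV[R]_n) :
  S^T = S -> C^T = C -> K^T = K ->
  (forall p (A : 'M[R]_(p, n)), A *m M *m K = A) ->
  (forall p (A : 'M[R]_(p, n)), A *m K *m M = A) ->
  (x^T *m S *m x) 0 0 - (w^T *m C *m S *m x) 0 0
    - (x^T *m S *m C *m w) 0 0 + (w^T *m M *m w) 0 0
  = (x^T *m (S - S *m C *m K *m C *m S) *m x) 0 0
    + ((w - K *m C *m S *m x)^T *m M *m (w - K *m C *m S *m x)) 0 0.
Proof.
move=> ST CT KT MK KM.
rewrite !(trD, trN, trmx_mul, CT, KT, ST).
rewrite !(mulmxDl, mulmxDr, mulNmx, mulmxN) !mulmxA !MK !KM.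
rewrite !(eD, eN); ring.
Qed.

Lemma quad_split n (H X W : 'M[R]_n) (x : 'cV[R]_n) :
  (x^T *m (H *m X *m H^T + W) *m x) 0 0
  = ((H^T *m x)^T *m X *m (H^T *m x)) 0 0 + (x^T *m W *m x) 0 0.
Proof.
by rewrite mulmxDr mulmxDl eD trmx_mul trmxK !mulmxA.
Qed.

Lemma sq_gt0 (a : R) : a != 0 -> 0 < a ^+ 2.
Proof. by move=> a0; rewrite lt_def sqr_ge0 sqrf_eq0 a0. Qed.

End Helpers.

Theorem theorem4 (R : rcfType) (n m : nat)
    (H W : 'M[R]_n) (D : 'M[R]_(n, m)) (c sigma : 'I_n -> R)
    (Sigma : 'M[R]_n) (lamW : R) (l u : 'I_n) :
  pd W ->
  W = D *m D^T ->
  (forall i, c i != 0) ->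
  (forall i, 0 < sigma i) ->
  let C : 'M[R]_n := diag_mx (\row_i c i) in
  let V : 'M[R]_n := diag_mx (\row_i (sigma i ^+ 2)) in
  observable H C ->
  controllable H D ->
  psd Sigma ->
  Sigma = H *m Sigma *m H^T
          - H *m Sigma *m C^T *m invmx (C *m Sigma *m C^T + V) *m C *m Sigma *m H^T
          + W ->
  is_min_eigenvalue W lamW ->
  (forall i, c l ^+ 2 / sigma l ^+ 2 <= c i ^+ 2 / sigma i ^+ 2) ->
  (forall i, c i ^+ 2 / sigma i ^+ 2 <= c u ^+ 2 / sigma u ^+ 2) ->
  let Sigmabar : 'M[R]_n :=
    Sigma - Sigma *m C^T *m invmx (C *m Sigma *m C^T + V) *m C *m Sigma in
  (sigma u ^+ 2 / (c u ^+ 2 + sigma u ^+ 2 / lamW)) ^+ n <= \det Sigmabar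
  /\ \det Sigmabar <= (sigma l ^+ 2 / c l ^+ 2) ^+ n.
Proof.
move=> Wpd WD cn0 sg0 C V _ _ [Ssym Spsd] Seq lammin Hl Hu Sb.
have CT : C^T = C by rewrite tr_diag_mx.
have VT : V^T = V by rewrite tr_diag_mx.
pose M := C *m Sigma *m C^T + V.
pose K := invmx M.
have MT : M^T = M by rewrite /M trD !trmx_mul trmxK Ssym VT CT mulmxA.
have KT : K^T = K by rewrite /K trmx_inv MT.
have Cw (w : 'cV[R]_n) i : (C *m w) i 0 = c i * w i 0 by rewrite mul_diag_mx !mxE.
have qfV (w : 'cV[R]_n) : (w^T *m V *m w) 0 0 = \sum_i sigma i ^+ 2 * w i 0 ^+ 2.
  by rewrite qf_diag; apply: eq_bigr => i _; rewrite mxE.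
have qfV0 (w : 'cV[R]_n) : 0 <= (w^T *m V *m w) 0 0.
  by rewrite qfV sumr_ge0 // => i _; rewrite mulr_ge0 ?sqr_ge0.
have Mqf (w : 'cV[R]_n) : (w^T *m M *m w) 0 0
   = ((C *m w)^T *m Sigma *m (C *m w)) 0 0 + (w^T *m V *m w) 0 0.
  by rewrite /M mulmxDr mulmxDl eD trmx_mul CT !mulmxA.
have Mpsd (w : 'cV[R]_n) : 0 <= (w^T *m M *m w) 0 0.
  by rewrite Mqf addr_ge0 // Spsd.
have Munit : M \in unitmx.
  rewrite -row_free_unit -kermx_eq0; apply/eqP/row_matrixP => i; rewrite row0.
  set v := row i (kermx M).
  have vM : v *m M = 0 by rewrite /v -row_mul mulmx_ker row0.
  apply/eqP/negPn/negP => vn0.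
  have vTn0 : v^T != 0 by apply: contra vn0 => /eqP h; rewrite -[v]trmxK h trmx0.
  have h := @wsum_gt0 R n (fun j => sigma j ^+ 2) v^T (fun j => exprn_gt0 _ (sg0 j)) vTn0.
  rewrite -qfV in h.
  have e1 := Mqf v^T; rewrite trmxK vM mul0mx mxE in e1.
  rewrite trmxK in h; have := Spsd (C *m v^T); lra.
have MK (p : nat) (A : 'M[R]_(p, n)) : A *m M *m K = A by rewrite -mulmxA mulmxV // mulmx1.
have KM (p : nat) (A : 'M[R]_(p, n)) : A *m K *m M = A by rewrite -mulmxA mulVmx // mulmx1.
have F1 (x w : 'cV[R]_n) :
  (x^T *m Sigma *m x) 0 0 - (w^T *m C *m Sigma *m x) 0 0
    - (x^T *m Sigma *m C *m w) 0 0 + (w^T *m M *m w) 0 0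
  = ((x - C *m w)^T *m Sigma *m (x - C *m w)) 0 0 + (w^T *m V *m w) 0 0.
  rewrite Mqf !(trD, trN, trmx_mul, CT) !(mulmxDl, mulmxDr, mulNmx, mulmxN) !mulmxA.
  rewrite !(eD, eN); ring.
have Fmin (x w : 'cV[R]_n) :
  (x^T *m Sigma *m x) 0 0 - (w^T *m C *m Sigma *m x) 0 0
    - (x^T *m Sigma *m C *m w) 0 0 + (w^T *m M *m w) 0 0
  = (x^T *m Sb *m x) 0 0
    + ((w - K *m C *m Sigma *m x)^T *m M *m (w - K *m C *m Sigma *m x)) 0 0.
  rewrite /Sb -/M -/K CT; exact: Fmin_gen.
pose ws (x : 'cV[R]_n) := K *m C *m Sigma *m x.
have Sbqf (x : 'cV[R]_n) : (x^T *m Sb *m x) 0 0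
   = ((x - C *m ws x)^T *m Sigma *m (x - C *m ws x)) 0 0 + ((ws x)^T *m V *m ws x) 0 0.
  have := Fmin x (ws x); rewrite F1 subrr trmx0 !mul0mx => ->.
  by rewrite [X in _ + X]mxE addr0.
have Sbpsd (x : 'cV[R]_n) : 0 <= (x^T *m Sb *m x) 0 0.
  by rewrite Sbqf addr_ge0 // Spsd.
have SbT : Sb^T = Sb.
  by rewrite /Sb -/M -/K !(trD, trN, trmx_mul, Ssym, KT, CT) !mulmxA.
have HSb : H *m Sigma *m H^T
    - H *m Sigma *m C^T *m invmx (C *m Sigma *m C^T + V) *m C *m Sigma *m H^T
    = H *m Sb *m H^T.
  by rewrite /Sb mulmxBr mulmxBl !mulmxA.
have SgeW (x : 'cV[R]_n) : (x^T *m W *m x) 0 0 <= (x^T *m Sigma *m x) 0 0.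
  by rewrite {1}Seq HSb quad_split lerDr.
have Wlam (x : 'cV[R]_n) : lamW * (x^T *m x) 0 0 <= (x^T *m W *m x) 0 0.
  exact: SpecM.min_eig_qf (proj1 Wpd) lammin x.
have lam0 : 0 < lamW.
  case: (lammin) => /eigenvalueP [v vW vn0] _.
  have vTn0 : v^T != 0 by apply: contra vn0 => /eqP h; rewrite -[v]trmxK h trmx0.
  have := proj2 Wpd v^T vTn0; rewrite trmxK vW -scalemxAl mxE.
  by rewrite pmulr_lgt0 // SpecM.norm2_gt0.
pose k := sigma u ^+ 2 / (c u ^+ 2 + sigma u ^+ 2 / lamW).
have su0 := sq_gt0 (negbT (gt_eqF (sg0 u))).
have cu0 := sq_gt0 (cn0 u).
have k0 : 0 < k.
  by rewrite /k; apply: divr_gt0 => //; apply: addr_gt0 => //; apply: divr_gt0.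
have hk i : k * (lamW^-1 + c i ^+ 2 / sigma i ^+ 2) <= 1.
  have <- : k * (lamW^-1 + c u ^+ 2 / sigma u ^+ 2) = 1.
    rewrite /k; field.
    rewrite (negbT (gt_eqF (sg0 u))).
    have hp : 0 < c u ^+ 2 * lamW + sigma u ^+ 2.
      by apply: addr_gt0 => //; exact: mulr_gt0.
    by rewrite (gt_eqF lam0) (gt_eqF hp).
  by rewrite ler_pM2l // lerD2l.
have Lo (x : 'cV[R]_n) : k * (x^T *m x) 0 0 <= (x^T *m Sb *m x) 0 0.
  rewrite Sbqf; set w := ws x; set y := x - C *m w.
  have yx i : x i 0 = y i 0 + c i * w i 0.
    by rewrite /y eD eN Cw; ring.
  have h1 : lamW * (y^T *m y) 0 0 <= (y^T *m Sigma *m y) 0 0.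
    exact: le_trans (Wlam y) (SgeW y).
  suff h2 : k * (x^T *m x) 0 0 <= lamW * (y^T *m y) 0 0 + (w^T *m V *m w) 0 0.
    lra.
  rewrite !nrm_sum (qfV w) mulr_sumr mulr_sumr -big_split; apply: ler_sum => i _ /=.
  rewrite yx; apply: percoord => //; first exact: sq_gt0 (negbT (gt_eqF (sg0 i))).
  exact: ltW.
pose d := sigma l ^+ 2 / c l ^+ 2.
have Up (x : 'cV[R]_n) : (x^T *m Sb *m x) 0 0 <= d * (x^T *m x) 0 0.
  pose w0 : 'cV[R]_n := \col_i (x i 0 / c i).
  have Cw0 : C *m w0 = x.
    apply/matrixP => i j; rewrite ord1 Cw mxE; field; exact: cn0.
  have := Fmin x w0; rewrite F1 Cw0 subrr trmx0 !mul0mx mxE add0r => E.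
  apply: (@le_trans _ _ ((w0^T *m V *m w0) 0 0)).
    by rewrite E lerDl.
  rewrite qfV nrm_sum mulr_sumr; apply: ler_sum => i _.
  have ci0 := sq_gt0 (cn0 i); have si0 := sq_gt0 (negbT (gt_eqF (sg0 i))).
  have cl0 := sq_gt0 (cn0 l); have sl0 := sq_gt0 (negbT (gt_eqF (sg0 l))).
  have hi : sigma i ^+ 2 / c i ^+ 2 <= d.
    rewrite /d -[sigma i ^+ 2 / _]invf_div -[sigma l ^+ 2 / _]invf_div.
    by rewrite lef_pV2 ?Hl // posrE divr_gt0.
  have -> : sigma i ^+ 2 * w0 i 0 ^+ 2 = sigma i ^+ 2 / c i ^+ 2 * x i 0 ^+ 2.
    by rewrite mxE; field; exact: cn0.
  by rewrite ler_wpM2r ?sqr_ge0.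
have /andP [h1 h2] := SpecM.det_bounds SbT (ltW k0) Lo Up.
by split.
Qed.
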